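(* Let $M$ be a smooth hypersurface immersed in $\mathbb R^{n+1}$ and suppose that at some point, for some $\varepsilon>0$, the second fundamental form satisfies $\alpha\ge \varepsilon H g>0$ (i.e. $k_1\ge\varepsilon H>0$). Then $\varepsilon\le 1/n$, and at that point $$|H\nabla\alpha-\alpha\nabla H|^2\ \ge\ \frac{n-1}{2}\,\varepsilon^2H^2|\nabla A|^2 .$$
   Context: $g$ is the induced metric, $\alpha$ the second fundamental form, $A$ the Weingarten map ($\alpha=g(A\cdot,\cdot)$), $k_1\le\dots\le k_n$ the principal curvatures, $H=\sum k_i$, $\nabla$ the Levi-Civita connection of $g$; norms are taken with respect to $g$, and $H\nabla\alpha-\alpha\nabla H$ denotes the 3-tensor $H\nabla_i\alpha_{jl}-\alpha_{jl}\nabla_iH$. *)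

(* Defs.v *)
(* Pointwise (orthonormal-frame) model of the data of a
   hypersurface in R^(n+1) at a point. *)
From HB Require Import structures.
From mathcomp Require Import all_boot all_order all_algebra.
Set Implicit Arguments. Unset Strict Implicit. Unset Printing Implicit Defensive.
Import Order.TTheory GRing.Theory Num.Theory.
Local Open Scope ring_scope.

(* alpha : components alpha_{jl} of the second fundamental form in an
   orthonormal frame at the point; D i j l = nabla_i alpha_{jl}. *)

Definition meanH (R : ringType) (n : nat) (alpha : 'M[R]_n) : R := \tr alpha.

Definition gradH (R : ringType) (n : nat) (D : 'I_n -> 'I_n -> 'I_n -> R)
  (i : 'I_n) : R := \sum_(j < n) D i j j.

Definition norm2_3 (R : ringType) (n : nat) (T : 'I_n -> 'I_n -> 'I_n -> R) : R :=
  \sum_(i < n) \sum_(j < n) \sum_(l < n) T i j l ^+ 2.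

Definition HDa (R : ringType) (n : nat) (alpha : 'M[R]_n)
  (D : 'I_n -> 'I_n -> 'I_n -> R) : 'I_n -> 'I_n -> 'I_n -> R :=
  fun i j l => meanH alpha * D i j l - alpha j l * gradH D i.

Definition qform (R : ringType) (n : nat) (b : 'M[R]_n) (v : 'rV[R]_n) : R :=
  (v *m b *m v^T) 0 0.

(* Main.v *)
Require Import Defs.
From HB Require Import structures.
From mathcomp Require Import all_boot all_order all_algebra.
From mathcomp Require Import ring lra.
Import Order.TTheory GRing.Theory Num.Theory.
Local Open Scope ring_scope.

Lemma sum_delta (R : ringType) (n : nat) (j : 'I_n) (F : 'I_n -> R) :
  \sum_(l < n) (l == j)%:R * F l = F j.
Proof.
rewrite (bigD1 j) //= eqxx mul1r big1 ?addr0 // => l /negbTE ->.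
by rewrite mul0r.
Qed.

Lemma sum2pt (R : comRingType) (n : nat) (i j : 'I_n) (x y : R) (F : 'I_n -> R) :
  \sum_(l < n) (x * (l == j)%:R + y * (l == i)%:R) * F l = x * F j + y * F i.
Proof.
under eq_bigr do rewrite mulrDl -!mulrA.
by rewrite big_split /= -!mulr_sumr !sum_delta.
Qed.

Lemma qform_row (R : comRingType) (n : nat) (b : 'M[R]_n) (f : 'I_n -> R) :
  qform b (\row_l f l) = \sum_(q < n) (\sum_(p < n) f p * b p q) * f q.
Proof.
rewrite /qform !mxE; apply: eq_bigr => q _; rewrite !mxE; congr (_ * _).
by apply: eq_bigr => p _; rewrite mxE.
Qed.

Lemma qform2 (R : comRingType) (n : nat) (b : 'M[R]_n) (i j : 'I_n) (x y : R) :
  qform b (\row_l (x * (l == j)%:R + y * (l == i)%:R)) =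
  x * (x * b j j + y * b i j) + y * (x * b j i + y * b i i).
Proof.
rewrite qform_row.
under eq_bigr do rewrite sum2pt mulrC.
by rewrite sum2pt.
Qed.

Lemma proj_lemma (R : realFieldType) (I : finType) (X a : I -> R) (H g : R) :
  let A2 := \sum_p a p ^+ 2 in
  let nu := (\sum_p X p * a p) / A2 in
  A2 != 0 ->
  \sum_p X p ^+ 2 = \sum_p (X p - nu * a p) ^+ 2 + nu ^+ 2 * A2 /\
  H ^+ 2 * \sum_p (X p - nu * a p) ^+ 2 <= \sum_p (H * X p - g * a p) ^+ 2.
Proof.
move=> A2 nu hA.
have hZa : \sum_p (X p - nu * a p) * a p = 0.
  under eq_bigr do rewrite mulrBl -mulrA -expr2.
  by rewrite sumrB -mulr_sumr /nu -/A2 divfK // subrr.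
split.
  have -> : \sum_p X p ^+ 2 = \sum_p ((X p - nu * a p) ^+ 2
       + (2 * nu) * ((X p - nu * a p) * a p) + nu ^+ 2 * a p ^+ 2).
    by apply: eq_bigr => p _; ring.
  by rewrite !big_split /= -!mulr_sumr hZa mulr0 addr0.
have -> : \sum_p (H * X p - g * a p) ^+ 2 = \sum_p (H ^+ 2 * (X p - nu * a p) ^+ 2
       + (2 * H * (H * nu - g)) * ((X p - nu * a p) * a p)
       + (H * nu - g) ^+ 2 * a p ^+ 2).
  by apply: eq_bigr => p _; ring.
rewrite !big_split /= -!mulr_sumr hZa mulr0 addr0 lerDl.
by rewrite mulr_ge0 ?sqr_ge0 // sumr_ge0 // => p _; rewrite sqr_ge0.
Qed.

Lemma count_pairs (R : comRingType) (n : nat) (f : 'I_n -> R) :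
  \sum_(i < n) \sum_(j < n) (i != j)%:R * (f i + f j) =
  (n%:R - 1) * 2 * \sum_(i < n) f i.
Proof.
have -> : \sum_(i < n) \sum_(j < n) (i != j)%:R * (f i + f j) =
   \sum_(i < n) (\sum_(j < n) (f i + f j) - \sum_(j < n) (j == i)%:R * (f i + f j)).
  apply: eq_bigr => i _; rewrite -sumrB; apply: eq_bigr => j _.
  by rewrite eq_sym; case: eqP => _; rewrite ?mul1r ?mul0r ?subrr ?subr0.
under eq_bigr do rewrite sum_delta big_split /= sumr_const card_ord.
rewrite sumrB big_split /= sumr_const card_ord big_split /= sumrMnl.
move: (\sum_(i < n) f i) => S.
rewrite -(mulr_natr S n); ring.
Qed.

Theorem mainTheorem3 (R : rcfType) (n : nat) (alpha : 'M[R]_n)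
  (D : 'I_n -> 'I_n -> 'I_n -> R) (eps : R)
  (alpha_sym : alpha^T = alpha)
  (D_sym_jl : forall i j l, D i j l = D i l j)
  (D_codazzi : forall i j l, D i j l = D j i l)
  (eps_pos : 0 < eps)
  (epsH_pos : 0 < eps * meanH alpha)
  (alpha_ge : forall v : 'rV[R]_n,
      eps * meanH alpha * qform 1%:M v <= qform alpha v) :
  eps <= n%:R^-1 /\
  (n%:R - 1) / 2 * eps ^+ 2 * meanH alpha ^+ 2 * norm2_3 D
    <= norm2_3 (HDa alpha D).
Proof.
have asym j l : alpha j l = alpha l j by rewrite -{1}alpha_sym mxE.
set H := meanH alpha.
have Hdef : H = \sum_(j < n) alpha j j by [].
have H_pos : 0 < H by rewrite -(pmulr_rgt0 _ eps_pos).
set b := eps * H.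
have n_gt0 : (0 < n)%N.
  rewrite lt0n; apply/eqP => n0; move: H_pos; rewrite Hdef.
  by rewrite big1 ?ltxx // => j _; have := ltn_ord j; rewrite {2}n0.
have diag j : b <= alpha j j.
  have := alpha_ge (\row_l (1 * (l == j)%:R + 0 * (l == j)%:R)).
  by rewrite !qform2 !mxE eqxx !mul0r !addr0 !mul1r /= mulr1.
have q2 i j x y : i != j ->
    b * (x ^+ 2 + y ^+ 2) <=
    x * (x * alpha j j + y * alpha i j) + y * (x * alpha j i + y * alpha i i).
  move=> hij.
  have := alpha_ge (\row_l (x * (l == j)%:R + y * (l == i)%:R)).
  rewrite !qform2 !mxE !eqxx (negbTE hij) eq_sym (negbTE hij) /=.
  by rewrite !mulr1 !mulr0 !addr0 !add0r -!expr2.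
split.
  have : b *+ n <= H.
    rewrite Hdef; apply: le_trans (ler_sum _ (fun j _ => diag j)).
    by rewrite sumr_const card_ord.
  rewrite -mulr_natr /b mulrAC -{2}(mul1r H) ler_pM2r // => hn.
  by rewrite -[n%:R^-1]mul1r ler_pdivlMr // ltr0n.
pose A2 := \sum_(p : 'I_n * 'I_n) alpha p.1 p.2 ^+ 2.
have A2E : A2 = \sum_(j < n) \sum_(l < n) alpha j l ^+ 2 by rewrite pair_bigA.
have A2_pos : 0 < A2.
  rewrite A2E; apply: (@lt_le_trans _ _ (b * H)); first exact: mulr_gt0.
  rewrite Hdef mulr_sumr; apply: ler_sum => j _.
  rewrite (bigD1 j) //= -[_ * _]addr0 lerD //.
    by rewrite expr2 ler_pM2r // (lt_le_trans epsH_pos (diag j)).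
  by apply: sumr_ge0 => l _; exact: sqr_ge0.
pose nu i := (\sum_(p : 'I_n * 'I_n) D i p.1 p.2 * alpha p.1 p.2) / A2.
pose Z i j l := D i j l - nu i * alpha j l.
pose Zn := \sum_(i < n) \sum_(j < n) \sum_(l < n) Z i j l ^+ 2.
pose V := \sum_(i < n) nu i ^+ 2.
have A2n0 : A2 != 0 by rewrite gt_eqF.
have factA : H ^+ 2 * Zn <= norm2_3 (HDa alpha D).
  rewrite /Zn mulr_sumr /norm2_3; apply: ler_sum => i _.
  rewrite !pair_bigA.
  case: (@proj_lemma _ _ (fun p => D i p.1 p.2) (fun p => alpha p.1 p.2) H (gradH D i) A2n0)
    => _ h.
  apply: le_trans h _; rewrite le_eqVlt; apply/orP; left; apply/eqP/eq_bigr => p _.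
  by rewrite /HDa -/H [gradH _ _ * _]mulrC.
have factC : norm2_3 D = Zn + A2 * V.
  rewrite /norm2_3 /Zn /V mulr_sumr -big_split; apply: eq_bigr => i _ /=.
  rewrite !pair_bigA.
  case: (@proj_lemma _ _ (fun p => D i p.1 p.2) (fun p => alpha p.1 p.2) H (gradH D i) A2n0)
    => -> _.
  by rewrite [A2 * _]mulrC.
have factB : \sum_(i < n) \sum_(j < n) \sum_(l < n) (nu i * alpha j l - nu j * alpha i l) ^+ 2
    <= 2 * Zn + 2 * Zn.
  apply: (@le_trans _ _ (\sum_(i < n) \sum_(j < n) \sum_(l < n)
      (2 * Z j i l ^+ 2 + 2 * Z i j l ^+ 2))).
    apply: ler_sum => i _; apply: ler_sum => j _; apply: ler_sum => l _.
    have -> : nu i * alpha j l - nu j * alpha i l = Z j i l - Z i j l.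
      by rewrite /Z (D_codazzi i j l); ring.
    move: (Z j i l) (Z i j l) => x y; rewrite -subr_ge0.
    have -> : 2 * x ^+ 2 + 2 * y ^+ 2 - (x - y) ^+ 2 = (x + y) ^+ 2 by ring.
    exact: sqr_ge0.
  under eq_bigr do under eq_bigr do rewrite big_split /=.
  under eq_bigr do rewrite big_split /=.
  rewrite big_split /= [X in X + _ <= _]exchange_big /=.
  have eZ : \sum_(i < n) \sum_(j < n) \sum_(l < n) 2 * Z i j l ^+ 2 = 2 * Zn.
    rewrite /Zn mulr_sumr; apply: eq_bigr => i _; rewrite mulr_sumr.
    by apply: eq_bigr => j _; rewrite mulr_sumr.
  by rewrite eZ.
have factB' : (n%:R - 1) * 2 * \sum_(i < n) (b ^+ 2 * nu i ^+ 2) <=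
   \sum_(i < n) \sum_(j < n) \sum_(l < n) (nu i * alpha j l - nu j * alpha i l) ^+ 2.
  have b_ge0 : 0 <= b by exact: ltW.
  rewrite -(@count_pairs _ _ (fun i => b ^+ 2 * nu i ^+ 2)).
  apply: ler_sum => i _; apply: ler_sum => j _.
  case: (eqVneq i j) => [<-|hij].
    by rewrite mul0r; apply: sumr_ge0 => l _; exact: sqr_ge0.
  rewrite mul1r.
  move: (nu i) (nu j) => x y.
  pose w (l : 'I_n) := x * (l == j)%:R + (- y) * (l == i)%:R.
  have hw : \sum_(l < n) w l * w l = x ^+ 2 + y ^+ 2.
    rewrite sum2pt /w !eqxx (negbTE hij) eq_sym (negbTE hij) /=.
    by rewrite !mulr1 !mulr0 addr0 add0r; ring.
  have huw : \sum_(l < n) w l * (x * alpha j l - y * alpha i l) =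
      x * (x * alpha j j - y * alpha i j) + - y * (x * alpha j i - y * alpha i i).
    by rewrite sum2pt.
  have hq := q2 i j x (- y) hij.
  have hsq : 0 <= \sum_(l < n) ((x * alpha j l - y * alpha i l) - b * w l) ^+ 2.
    by apply: sumr_ge0 => l _; exact: sqr_ge0.
  have e : \sum_(l < n) ((x * alpha j l - y * alpha i l) - b * w l) ^+ 2 =
     \sum_(l < n) (x * alpha j l - y * alpha i l) ^+ 2
     - 2 * b * \sum_(l < n) w l * (x * alpha j l - y * alpha i l)
     + b ^+ 2 * \sum_(l < n) w l * w l.
    rewrite !mulr_sumr -sumrB -big_split; apply: eq_bigr => l _ /=; ring.
  rewrite e huw hw in hsq.
  have hq' : b * (x ^+ 2 + y ^+ 2) <=
      x * (x * alpha j j - y * alpha i j) + - y * (x * alpha j i - y * alpha i i).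
    move: hq; rewrite sqrrN.
    have -> : x * (x * alpha j j + - y * alpha i j) + - y * (x * alpha j i + - y * alpha i i)
      = x * (x * alpha j j - y * alpha i j) + - y * (x * alpha j i - y * alpha i i) by ring.
    by [].
  have hm := ler_wpM2l b_ge0 hq'.
  move: hsq hm.
  move: (\sum_(l < n) (x * alpha j l - y * alpha i l) ^+ 2)
        (x * (x * alpha j j - y * alpha i j) + - y * (x * alpha j i - y * alpha i i)) => s t.
  lra.
have factD : (n%:R - 1) * 2 * \sum_(i < n) (b ^+ 2 / 2) <= H ^+ 2 - A2.
  have eH : H ^+ 2 - A2 =
      \sum_(j < n) \sum_(l < n) (alpha j j * alpha l l - alpha j l ^+ 2).
    rewrite A2E Hdef expr2 mulr_suml -sumrB; apply: eq_bigr => j _.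
    by rewrite mulr_sumr -sumrB.
  rewrite eH -(@count_pairs _ _ (fun _ => b ^+ 2 / 2)).
  apply: ler_sum => j _; apply: ler_sum => l _.
  case: (eqVneq j l) => [<-|hjl].
    by rewrite mul0r expr2 subrr.
  rewrite mul1r -splitr.
  have hlj : l != j by rewrite eq_sym.
  have hq := q2 l j (alpha l l) (- alpha j l) hlj.
  rewrite (asym l j) in hq.
  have hl := diag l.
  have b_pos : 0 < b by [].
  have al_pos : 0 < alpha l l := lt_le_trans b_pos hl.
  have h1 : 0 <= alpha l l * (alpha j j * alpha l l - alpha j l ^+ 2 - b * alpha l l).
    have hb2 : 0 <= b * alpha j l ^+ 2 by rewrite mulr_ge0 ?sqr_ge0 // ltW.
    move: hq hb2; rewrite sqrrN => hq hb2.
    have -> : alpha l l * (alpha j j * alpha l l - alpha j l ^+ 2 - b * alpha l l) =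
      (alpha l l * (alpha l l * alpha j j + - alpha j l * alpha j l) +
       - alpha j l * (alpha l l * alpha j l + - alpha j l * alpha l l))
      - b * (alpha l l ^+ 2 + alpha j l ^+ 2) + b * alpha j l ^+ 2 by ring.
    by rewrite addr_ge0 // subr_ge0.
  rewrite pmulr_rge0 // subr_ge0 in h1.
  apply: le_trans h1; rewrite expr2 ler_pM2l //.
have Zn_ge0 : 0 <= Zn by do 3 (apply: sumr_ge0 => ? _); exact: sqr_ge0.
have V_ge0 : 0 <= V by apply: sumr_ge0 => ? _; exact: sqr_ge0.
have n_ge1 : 1 <= n%:R :> R by rewrite ler1n.
move: factB' factD; rewrite -mulr_sumr sumr_const card_ord -/V => fB fD.
rewrite factC.
set c := (n%:R - 1) / 2 * b ^+ 2.
have c_ge0 : 0 <= c.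
  by rewrite /c mulr_ge0 ?sqr_ge0 // divr_ge0 // subr_ge0.
have h1 : c * V <= Zn.
  have := le_trans fB factB; rewrite /c.
  move: (n%:R : R) (b ^+ 2) => k bb h; nra.
have h2 : c <= H ^+ 2 - A2.
  apply: le_trans fD; rewrite -[_ / 2 *+ n]mulr_natr /c.
  move: (n%:R : R) n_ge1 (b ^+ 2) (sqr_ge0 b) => k hk bb hb.
  rewrite -subr_ge0.
  have -> : (k - 1) * 2 * (bb / 2 * k) - (k - 1) / 2 * bb =
     ((k - 1) * bb) * (k - 1 / 2) by field.
  have hk' : 0 <= k - 1 by rewrite subr_ge0.
  by rewrite !mulr_ge0 // subr_ge0 (le_trans _ hk) // ler_pdivrMr // mul1r ler1n.
have -> : (n%:R - 1) / 2 * eps ^+ 2 * H ^+ 2 = c by rewrite /c /b exprMn; ring.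
apply: le_trans factA.
have hA : 0 <= A2 by exact: ltW.
rewrite mulrDr mulrCA.
have := ler_wpM2l hA h1; have := ler_wpM2r Zn_ge0 h2.
lra.
Qed.
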